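(* There is a constant $c$ such that for every $n\in\mathbb N$ and every $n$-ary Boolean function $f:\mathbb B^n\to\mathbb B$ there exists an instruction sequence $X\in\mathrm{IS}^{na}_{br}$ in which no jump instruction occurs such that $X$ computes $f$ and $|X|\le c\cdot(n+1)\cdot 2^n$.
   Context: $\mathbb B=\{T,F\}$. A primitive instruction is one of: a plain basic instruction $a$, a positive test instruction $+a$, a negative test instruction $-a$ (for a basic instruction $a$), a forward jump instruction $\#l$ ($l\in\mathbb N$), or the termination instruction $!$. An instruction sequence is a finite nonempty sequence $X=u_1;\dots;u_k$ of primitive instructions; its length is $|X|=k$. Basic instructions have the form $f.m$ where the focus $f$ is one of $\mathrm{in}{:}i$, $\mathrm{aux}{:}i$ ($i\ge 1$) or $\mathrm{out}$, each naming a Boolean register, and the method $m$ is one of $\mathrm{set}{:}T$, $\mathrm{set}{:}F$, $\mathrm{get}$. Executing $f.\mathrm{set}{:}b$ sets register $f$ to $b$ and yields reply $b$; executing $f.\mathrm{get}$ leaves the register unchanged and yields its content as reply. Execution of $X=u_1;\dots;u_k$: a counter starts at $1$. If the counter exceeds $k$, execution deadlocks. At position $i$: if $u_i=!$, execution terminates; if $u_i=\#l$, execution deadlocks if $l=0$ and otherwise the counter becomes $i+l$; if $u_i$ is $a$, $+a$ or $-a$, the basic instruction $a$ is executed yielding reply $r$, and the counter becomes $i+1$ for $u_i=a$; for $u_i=+a$ it becomes $i+1$ if $r=T$ and $i+2$ if $r=F$; for $u_i=-a$ it becomes $i+1$ if $r=F$ and $i+2$ if $r=T$. $\mathrm{IS}_{br}$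 is the set of instruction sequences in which every basic instruction occurring belongs to $\{f.\mathrm{get}: f=\mathrm{in}{:}i \text{ or } f=\mathrm{aux}{:}i\}\cup\{f.\mathrm{set}{:}b: f=\mathrm{aux}{:}i \text{ or } f=\mathrm{out},\ b\in\mathbb B\}$. $\mathrm{IS}^{na}_{br}\subseteq \mathrm{IS}_{br}$ is the set of those in which every basic instruction belongs to $\{\mathrm{in}{:}i.\mathrm{get}: i\ge1\}\cup\{\mathrm{out}.\mathrm{set}{:}T,\mathrm{out}.\mathrm{set}{:}F\}$. $X\in\mathrm{IS}_{br}$ computes $f:\mathbb B^n\to\mathbb B$ if for every $(b_1,\dots,b_n)\in\mathbb B^n$: when $X$ is executed with register $\mathrm{in}{:}j$ initialised to $b_j$ ($j\le n$) and all registers $\mathrm{aux}{:}i$ and $\mathrm{out}$ initialised to $F$, execution terminates (does not deadlock) without ever executing a basic instruction with focus $\mathrm{in}{:}j$ for $j>n$, and at termination register $\mathrm{out}$ contains $f(b_1,\dots,b_n)$. *)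

(* Defs.v *)
From mathcomp Require Import all_boot.
Set Implicit Arguments. Unset Strict Implicit. Unset Printing Implicit Defensive.

(* Foci: in:i, aux:i (i >= 1, enforced by the IS_br predicates), out. *)
Inductive focus := FIn of nat | FAux of nat | FOut.
Inductive method := MSet of bool | MGet.
Record basic := Basic { bfocus : focus; bmethod : method }.

Inductive instr :=
  | IPlain of basic
  | IPos of basic
  | INeg of basic
  | IJump of nat
  | ITerm.

(* An instruction sequence: a finite nonempty list; |X| = size X. *)
Definition instr_seq := seq instr.
Definition nonempty_is (X : instr_seq) : Prop := X <> [::].

Record state := State { rin : nat -> bool; raux : nat -> bool; rout : bool }.

Definition exec_basic (a : basic) (s : state) : state * bool :=
  match bfocus a, bmethod a with
  | FIn i, MSet b => (State (fun j => if j == i then b else rin s j) (raux s) (rout s), b)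
  | FIn i, MGet => (s, rin s i)
  | FAux i, MSet b => (State (rin s) (fun j => if j == i then b else raux s j) (rout s), b)
  | FAux i, MGet => (s, raux s i)
  | FOut, MSet b => (State (rin s) (raux s) b, b)
  | FOut, MGet => (s, rout s)
  end.

Definition allowed (n : nat) (a : basic) : Prop :=
  match bfocus a with FIn j => j <= n | _ => True end.

(* Instruction at (1-based) position i, None if the counter is out of range *)
Definition fetch (X : instr_seq) (i : nat) : option instr :=
  if (0 < i) && (i <= size X) then Some (nth ITerm X i.-1) else None.

(* Terminating execution of X from counter i and state s, ending in state s',
   never executing a basic instruction with focus in:j, j > n.
   Deadlock (counter out of range, #0) has no derivation. *)
Inductive terminates (n : nat) (X : instr_seq) : nat -> state -> state -> Prop :=
  | T_term i s : fetch X i = Some ITerm -> terminates n X i s s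
  | T_jump i l s s' : fetch X i = Some (IJump l) -> 0 < l ->
      terminates n X (i + l) s s' -> terminates n X i s s'
  | T_plain i a s s' : fetch X i = Some (IPlain a) -> allowed n a ->
      terminates n X i.+1 (exec_basic a s).1 s' -> terminates n X i s s'
  | T_pos i a s s' : fetch X i = Some (IPos a) -> allowed n a ->
      terminates n X (if (exec_basic a s).2 then i.+1 else i.+2) (exec_basic a s).1 s' ->
      terminates n X i s s'
  | T_neg i a s s' : fetch X i = Some (INeg a) -> allowed n a ->
      terminates n X (if (exec_basic a s).2 then i.+2 else i.+1) (exec_basic a s).1 s' ->
      terminates n X i s s'.

Definition instr_basics (u : instr) : seq basic :=
  match u with IPlain a | IPos a | INeg a => [:: a] | _ => [::] end.

Definition br_basic (a : basic) : bool :=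
  match bfocus a, bmethod a with
  | FIn i, MGet => 0 < i
  | FAux i, _ => 0 < i
  | FOut, MSet _ => true
  | _, _ => false
  end.

Definition br_na_basic (a : basic) : bool :=
  match bfocus a, bmethod a with
  | FIn i, MGet => 0 < i
  | FOut, MSet _ => true
  | _, _ => false
  end.

Definition in_IS_br (X : instr_seq) : Prop :=
  nonempty_is X /\ all (fun u => all br_basic (instr_basics u)) X.

Definition in_IS_br_na (X : instr_seq) : Prop :=
  in_IS_br X /\ all (fun u => all br_na_basic (instr_basics u)) X.

Definition is_jump (u : instr) : bool := if u is IJump _ then true else false.
Definition jump_free (X : instr_seq) : Prop := ~~ has is_jump X.

(* Initial state: in:j holds b_j (j <= n, 1-based), aux:i and out hold F *)
Definition init_state (n : nat) (b : n.-tuple bool) : state :=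
  State (fun j => nth false b j.-1) (fun _ => false) false.

Definition computes (n : nat) (f : n.-tuple bool -> bool) (X : instr_seq) : Prop :=
  in_IS_br X /\
  forall b : n.-tuple bool, exists s',
    terminates n X 1 (init_state b) s' /\ rout s' = f b.

(* Main.v *)
Require Import Defs.
From mathcomp Require Import all_boot.
From Stdlib Require Import Lia.

Ltac nlia := rewrite -?plusE -?multE; lia.

Definition bget (j : nat) : basic := Basic (FIn j) MGet.
Definition Sins (j : nat) (b : bool) : instr :=
  if b then INeg (bget j) else IPos (bget j).
Definition Hins : instr := IPos (Basic FOut (MSet false)).
Definition Xins (v : bool) : instr :=
  if v then INeg (Basic FOut (MSet true)) else IPos (Basic FOut (MSet false)).

Fixpoint body (k : nat) (bs : seq bool) : seq instr :=
  match bs with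
  | [::] => [::]
  | b :: bs' => Sins k.+1 b :: Hins :: body k.+1 bs'
  end.

Definition blk (bs : seq bool) (v : bool) : seq instr :=
  body 0 bs ++ [:: Xins v; Hins; ITerm].

Lemma size_body k bs : size (body k bs) = 2 * size bs.
Proof. elim: bs k => [|b bs IH] k //=. rewrite IH. nlia. Qed.

Lemma fetch_at pre u post i : i = (size pre).+1 -> fetch (pre ++ u :: post) i = Some u.
Proof.
move=> ->; rewrite /fetch size_cat /= addnS ltnS leq_addr /=.
by rewrite nth_cat ltnn subnn.
Qed.

Definition Gk n X (rho : nat -> bool) k r :=
  forall o, exists s', terminates n X k (State rho (fun _ => false) o) s' /\ rout s' = r.

Lemma hstep n X rho k r : fetch X k = Some Hins -> Gk n X rho k.+2 r -> Gk n X rho k r.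
Proof.
move=> Hf G o; have [s' [T R]] := G false; exists s'; split => //.
by apply: (T_pos (a := Basic FOut (MSet false)) Hf I).
Qed.

Lemma tail_lem n X rho r v post bs : forall k pre,
  X = pre ++ Hins :: body k bs ++ Xins v :: Hins :: ITerm :: post ->
  Gk n X rho (size pre + 2 * size bs + 5) r -> Gk n X rho (size pre).+1 r.
Proof.
elim: bs => [|b bs IH] k pre EX G /=.
- apply: hstep; first by rewrite EX; apply: fetch_at.
  apply: hstep.
    have -> : X = (pre ++ [:: Hins; Xins v]) ++ Hins :: ITerm :: post by rewrite EX -catA.
    apply: fetch_at; rewrite size_cat /=; nlia.
  move: G; rewrite /=; have -> : size pre + 2 * 0 + 5 = (size pre).+1.+2.+2 by nlia. done.
- apply: hstep; first by rewrite EX; apply: fetch_at.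
  have -> : (size pre).+3 = (size (pre ++ [:: Hins; Sins k.+1 b])).+1 by rewrite size_cat /=; nlia.
  apply: (IH k.+1).
    by rewrite EX -catA.
  move: G; rewrite size_cat /=.
  have -> : size pre + 2 * (size bs).+1 + 5 = size pre + 2 + 2 * size bs + 5 by nlia. done.
Qed.

Lemma mism_lem n X rho r v post bs : forall k pre,
  k + size bs <= n ->
  X = pre ++ body k bs ++ Xins v :: Hins :: ITerm :: post ->
  (exists i, i < size bs /\ rho (k + i).+1 <> nth false bs i) ->
  Gk n X rho (size pre + 2 * size bs + 4) r -> Gk n X rho (size pre).+1 r.
Proof.
elim: bs => [|b bs IH] k pre Hk EX [i [Hi Hne]] G //=.
have Hf : fetch X (size pre).+1 = Some (Sins k.+1 b) by rewrite EX; apply: fetch_at.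
have Hal : allowed n (bget k.+1) by rewrite /allowed /=; move: Hk => /= Hk; apply/leP; move/leP: Hk; nlia.
case E: (rho k.+1 == b).
- move/eqP: E => E.
  have Hi0 : 0 < i.
    case: i Hi Hne => [|i] //= _; rewrite addn0 E //.
  have G' : Gk n X rho (size (pre ++ [:: Sins k.+1 b; Hins])).+1 r.
    apply: (IH k.+1).
    + by move: Hk => /=; rewrite addSnnS.
    + by rewrite EX -catA.
    + exists i.-1; split; first by move: Hi; case: (i) Hi0.
      by case: (i) Hi0 Hne => [|i'] //= _; rewrite addSnnS.
    + move: G; rewrite size_cat /=.
      have -> : size pre + 2 * (size bs).+1 + 4 = size pre + 2 + 2 * size bs + 4 by nlia. done.
  move=> o; have [s' [T R]] := G' o; exists s'; split => //.
  move: T; rewrite size_cat /= => T.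
  rewrite addn2 in T.
  clear -E Hf Hal T; case: b E Hf T => E Hf T.
  + apply: (T_neg Hf Hal); by rewrite /= E.
  + apply: (T_pos Hf Hal); by rewrite /= E.
- have G' : Gk n X rho (size (pre ++ [:: Sins k.+1 b])).+1 r.
    apply: (tail_lem n X rho r v post bs k.+1).
      by rewrite EX -catA.
    move: G; rewrite size_cat /=.
    have -> : size pre + 2 * (size bs).+1 + 4 = size pre + 1 + 2 * size bs + 5 by nlia. done.
  move=> o; have [s' [T R]] := G' o; exists s'; split => //.
  move: T; rewrite size_cat /= => T.
  rewrite addn1 in T.
  clear -E Hf Hal T; case: b E Hf T => E Hf T.
  + apply: (T_neg Hf Hal); move/negbT: E; rewrite eqb_id => /negbTE E. by rewrite /= E.
  + apply: (T_pos Hf Hal); move/negbT: E; rewrite eqbF_neg negbK => E. by rewrite /= E.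
Qed.

Lemma match_lem n X rho r v post bs : forall k pre,
  k + size bs <= n ->
  X = pre ++ body k bs ++ Xins v :: Hins :: ITerm :: post ->
  (forall i, i < size bs -> rho (k + i).+1 = nth false bs i) ->
  v = r -> Gk n X rho (size pre).+1 r.
Proof.
elim: bs => [|b bs IH] k pre Hk EX Hm Ev /=.
- have Hf : fetch X (size pre).+1 = Some (Xins v) by rewrite EX; apply: fetch_at.
  have Ht : fetch X (size pre).+3 = Some ITerm.
    have -> : X = (pre ++ [:: Xins v; Hins]) ++ ITerm :: post by rewrite EX -catA.
    apply: fetch_at; rewrite size_cat /=; nlia.
  move=> o; subst v; clear EX; case: r Hf => Hf.
  + exists (State rho (fun _ => false) true); split => //.
    apply: (T_neg (a := Basic FOut (MSet true)) Hf I) => /=. by apply: T_term.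
  + exists (State rho (fun _ => false) false); split => //.
    apply: (T_pos (a := Basic FOut (MSet false)) Hf I) => /=. by apply: T_term.
- have Hf : fetch X (size pre).+1 = Some (Sins k.+1 b) by rewrite EX; apply: fetch_at.
  have Hal : allowed n (bget k.+1) by rewrite /allowed /=; move: Hk => /= Hk; apply/leP; move/leP: Hk; nlia.
  have E : rho k.+1 = b by have := Hm 0 erefl; rewrite addn0.
  have G' : Gk n X rho (size (pre ++ [:: Sins k.+1 b; Hins])).+1 r.
    apply: (IH k.+1) => //.
    + by move: Hk => /=; rewrite addSnnS.
    + by rewrite EX -catA.
    + by move=> i Hi; have := Hm i.+1 Hi; rewrite addnS addSn.
  move=> o; have [s' [T R]] := G' o; exists s'; split => //.
  move: T; rewrite size_cat /= => T.
  rewrite addn2 in T.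
  clear -E Hf Hal T; case: b E Hf T => E Hf T.
  + apply: (T_neg Hf Hal); by rewrite /= E.
  + apply: (T_pos Hf Hal); by rewrite /= E.
Qed.

Definition rho_of {n} (b : n.-tuple bool) : nat -> bool := fun j => nth false b j.-1.

Lemma prog_lem n (f : n.-tuple bool -> bool) X (b : n.-tuple bool) :
  forall (s : seq (n.-tuple bool)) pre,
  X = pre ++ flatten [seq blk (val c) (f c) | c <- s] ->
  b \in s -> Gk n X (rho_of b) (size pre).+1 (f b).
Proof.
elim=> [|c s IH] pre EX //=.
rewrite inE => Hb.
have EX' : X = pre ++ body 0 c ++ Xins (f c) :: Hins :: ITerm :: flatten [seq blk (val c) (f c) | c <- s].
  by rewrite EX /=; rewrite /blk -!catA.
case: (eqVneq b c) => Ebc.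
- subst c; apply: (match_lem n X (rho_of b) (f b) (f b) _ (val b) 0 pre _ EX') => //.
    by rewrite size_tuple.
- move: Hb; rewrite (negbTE Ebc) /= => Hb.
  apply: (mism_lem n X (rho_of b) (f b) (f c) (flatten [seq blk (val c) (f c) | c <- s]) (val c) 0 pre _ EX') => //.
  + by rewrite size_tuple.
  + case: (boolP (has (fun i => nth false b i != nth false c i) (iota 0 n))).
      case/hasP => i; rewrite mem_iota add0n => /andP [_ Hi] Hne.
      exists i; split; first by rewrite size_tuple.
      by rewrite /rho_of /= add0n; apply/eqP.
    move/hasPn => Hall; exfalso; move/negP: Ebc; apply; apply/eqP.
    apply: val_inj; apply: (eq_from_nth (x0 := false)); first by rewrite !size_tuple.
    move=> i Hi; apply/eqP; move: (Hall i); rewrite mem_iota add0n /=; rewrite size_tuple in Hi; rewrite Hi.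
    by move=> /(_ isT) /negPn.
  + have -> : size pre + 2 * size c + 4 = (size (pre ++ blk (val c) (f c))).+1.
      by rewrite /blk !size_cat size_body /=; nlia.
    apply: IH => //; by rewrite EX catA.
Qed.

Definition good (u : instr) : bool :=
  all br_na_basic (instr_basics u) && all br_basic (instr_basics u) && ~~ is_jump u.

Lemma good_body k bs : all good (body k bs).
Proof. elim: bs k => [|b bs IH] k //=; rewrite IH; by case: b. Qed.

Lemma good_flat n (f : n.-tuple bool -> bool) s :
  all good (flatten [seq blk (val c) (f c) | c <- s]).
Proof.
elim: s => [|c s IH] //=; rewrite all_cat IH andbT /blk all_cat good_body /=.
by case: (f c).
Qed.

Lemma size_flat n (f : n.-tuple bool -> bool) s :
  size (flatten [seq blk (val c) (f c) | c <- s]) = size s * (2 * n + 3).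
Proof.
elim: s => [|c s IH] //=; rewrite size_cat IH /blk size_cat size_body size_tuple /=.
nlia.
Qed.

Theorem corollary1 :
  exists c : nat, forall (n : nat) (f : n.-tuple bool -> bool),
    exists X : instr_seq,
      in_IS_br_na X /\ jump_free X /\ computes f X /\
      size X <= c * (n + 1) * 2 ^ n.
Proof.
exists 3 => n f.
set s := enum {: n.-tuple bool}.
set X := flatten [seq blk (val c) (f c) | c <- s].
have Hsz : size X = 2 ^ n * (2 * n + 3).
  by rewrite /X size_flat /s -cardE card_tuple card_bool.
have Hpos : 0 < 2 ^ n by rewrite expn_gt0.
have Hne : nonempty_is X.
  move=> E; have : 0 < size X by rewrite Hsz muln_gt0 Hpos addn3.
  by rewrite E.
have Hg := @good_flat n f s; rewrite -/X in Hg.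
have Hbr : in_IS_br X.
  split; first exact Hne; apply: (sub_all _ Hg) => u.
  by rewrite /good => /andP [/andP [_ ->] _].
exists X; split; [|split; [|split]].
- split=> //; apply: (sub_all _ Hg) => u.
  by rewrite /good => /andP [/andP [-> _] _].
- rewrite /jump_free -all_predC; apply: (sub_all _ Hg) => u.
  by rewrite /good /= => /andP [_ ->].
- split=> // b.
  have := @prog_lem n f X b s [::] erefl.
  rewrite /s mem_enum => /(_ isT) G.
  exact: (G false).
- rewrite Hsz; apply/leP; move: Hpos => /leP Hpos.
  rewrite -?plusE -?multE; nia.
Qed.
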